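(* Let $p(x,y)$ be a real polynomial with $p(0,0)=0$, $\nabla p(0,0)=(0,0)$, $\dim\operatorname{Co}N_p=2$, such that for every $A\in\mathbb{N}^2$ the main $A$-quasi-homogeneous form of $p$ is nonnegative on $\mathbb{R}^2$. Let $A=(A_1,A_2)\in\mathcal{A}_p$ and suppose $\varphi_3^A\not\equiv 0$ and condition $(\tilde C2)_A$ holds. Let $x^{\omega_1}y^{\xi_1}$ be the monomial of the main term of $\varphi_3^A$. Then for every $u_0\in\tilde U_p(A)$ the system $x\neq0$, $y\neq0$, $x^{-A_2}y^{A_1}=u_0$, $x^{\omega_1}y^{\xi_1}g_3^A(u_0)<0$ has no real solution.
   Context: $\mathbb{N}=\{1,2,\dots\}$; $\mathbb{N}_0^2$ is the set of $(A_1,A_2)\in\mathbb{N}^2$ with $\gcd(A_1,A_2)=1$. $N_p$ is the support of $p$ and $\operatorname{Co}N_p$ its convex hull. For $A\in\mathbb{N}^2$ the main $A$-quasi-homogeneous form of $p$ is the sum of the terms of $p$ whose exponent vectors $k$ minimize $\langle A,k\rangle$ over $N_p$. For $A\in\mathbb{N}_0^2$, with $B_1^A<B_2^A<\dots$ the distinct values of $\langle A,k\rangle$ on $N_p$, $\varphi_i^A$ is the sum of terms of $p$ with $\langle A,k\rangle=B_i^A$. For such a form $\sum_i c_ix^{\gamma_i}y^{\delta_i}$ ($c_i\ne0$, $\gamma_1>\gamma_2>\dots$), its main term is $c_1x^{\gamma_1}y^{\delta_1}$ and its characteristic polynomial is $\sum_ic_iu^{(\gamma_1-\gamma_i)/A_2}$;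 $g_1^A,g_2^A,g_3^A$ are those of $\varphi_1^A,\varphi_2^A,\varphi_3^A$. $\mathcal{A}_p$ is the set of $A\in\mathbb{N}_0^2$ such that $\varphi_1^A$ has at least three terms, $g_1^A\ge0$ on $\mathbb{R}$, and $g_1^A$ has a real root. $\tilde U_p(A)=\{u\in\mathbb{R}: g_1^A(u)=0,\ g_2^A(u)=0\}$. Condition $(\tilde C2)_A$: for all $(x,y)$ with $\varphi_1^A(x,y)=\varphi_2^A(x,y)=0$, $x\neq0$, $y\neq0$, one has $\varphi_3^A(x,y)>0$; and $\varphi_2^A(x,y)\ge0$ for all $(x,y)\in\mathbb{R}^2$. *)

(* Defs.v *)
(* A real bivariate polynomial p(x,y) is an element of
   {poly {poly R}} for R : realType: the OUTER variable is x, the inner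
   coefficients are polynomials in y.  So the coefficient of x^i y^j is
   (p`_i)`_j. *)
From HB Require Import structures.
From mathcomp Require Import all_boot all_order all_algebra.
From mathcomp Require Import reals.
Set Implicit Arguments. Unset Strict Implicit. Unset Printing Implicit Defensive.
Import Order.TTheory GRing.Theory Num.Theory.
Local Open Scope ring_scope.

Section Defs.
Variable R : realType.
Implicit Types (p phi : {poly {poly R}}) (A : nat * nat).

Definition coef2 p (i j : nat) : R := (p`_i)`_j.

Definition eval2 p (x y : R) : R := (p.[x%:P]).[y].

Definition dx p : {poly {poly R}} := p^`().
Definition dy p : {poly {poly R}} := map_poly (fun q : {poly R} => q^`()) p.

Definition supp p : seq (nat * nat) :=
  [seq (i, j) | i <- iota 0%N (size p),
                j <- [seq j <- iota 0%N (size p`_i) | coef2 p i j != 0]].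

(* dim Co N_p = 2 : the support contains three affinely independent points *)
Definition conv_dim2 p : Prop :=
  exists k1 k2 k3, [/\ k1 \in supp p, k2 \in supp p, k3 \in supp p &
    ((k2.1%:Z - k1.1%:Z) * (k3.2%:Z - k1.2%:Z)
       - (k2.2%:Z - k1.2%:Z) * (k3.1%:Z - k1.1%:Z))%R != 0].

Definition wdeg A (k : nat * nat) : nat := A.1 * k.1 + A.2 * k.2.

Definition qh_part p A (B : nat) : {poly {poly R}} :=
  \poly_(i < size p) \poly_(j < size p`_i)
     (if wdeg A (i, j) == B then coef2 p i j else 0).

Definition levels p A : seq nat :=
  sort leq (undup [seq wdeg A k | k <- supp p]).

(* phi p A i = phi_{i+1}^A (0-indexed); 0 if there is no (i+1)-th level *)
Definition phi_ p A (i : nat) : {poly {poly R}} :=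
  if (i < size (levels p A))%N then qh_part p A (nth 0%N (levels p A) i) else 0.

Definition main_form p A : {poly {poly R}} := phi_ p A 0.

Definition nterms_row phi (i : nat) : nat :=
  count (fun j => coef2 phi i j != 0) (iota 0%N (size phi`_i)).
Definition nterms phi : nat := (\sum_(i < size phi) nterms_row phi i)%N.

(* main term c_1 x^{gamma_1} y^{delta_1}: the term with largest x-exponent *)
Definition main_xexp phi : nat := (size phi).-1.
Definition main_yexp phi : nat := (size (lead_coef phi)).-1.

Definition charpoly phi A : {poly R} :=
  \sum_(i < size phi) \sum_(j < size phi`_i)
     coef2 phi i j *: 'X^((main_xexp phi - i) %/ A.2).

Definition g_ p A (i : nat) : {poly R} := charpoly (phi_ p A i) A.

Definition inN02 A : Prop := [/\ (0 < A.1)%N, (0 < A.2)%N & coprime A.1 A.2].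

Definition in_calA p A : Prop :=
  [/\ inN02 A, (3 <= nterms (phi_ p A 0))%N,
      (forall u : R, 0 <= (g_ p A 0).[u]) &
      exists u : R, (g_ p A 0).[u] = 0].

Definition tildeU p A (u : R) : Prop := (g_ p A 0).[u] = 0 /\ (g_ p A 1).[u] = 0.

Definition tildeC2 p A : Prop :=
  (forall x y : R, eval2 (phi_ p A 0) x y = 0 -> eval2 (phi_ p A 1) x y = 0 ->
     x != 0 -> y != 0 -> 0 < eval2 (phi_ p A 2) x y)
  /\ (forall x y : R, 0 <= eval2 (phi_ p A 1) x y).

End Defs.

(* Main.v *)
Require Import Defs.
From HB Require Import structures.
From mathcomp Require Import all_boot all_order all_algebra.
From mathcomp Require Import reals zify ring.
Import Order.TTheory GRing.Theory Num.Theory.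
Local Open Scope ring_scope.

Section K.
Variable R : realType.

Lemma eval2E (phi : {poly {poly R}}) x y : eval2 phi x y =
  \sum_(i < size phi) \sum_(j < size phi`_i) coef2 phi i j * (x^+i * y^+j).
Proof.
rewrite /eval2 (horner_coef phi) horner_sum; apply: eq_bigr => i _.
rewrite hornerM -rmorphXn hornerC horner_coef mulr_suml; apply: eq_bigr => j _.
by rewrite /coef2; ring.
Qed.

Lemma charpolyE (phi : {poly {poly R}}) A u : (charpoly phi A).[u] =
  \sum_(i < size phi) \sum_(j < size phi`_i) coef2 phi i j * u ^+ ((main_xexp phi - i) %/ A.2).
Proof.
rewrite /charpoly horner_sum; apply: eq_bigr => i _.
rewrite horner_sum; apply: eq_bigr => j _.
by rewrite hornerZ hornerXn.
Qed.

Lemma natkey (a1 a2 i j g d : nat) : (0 < a2)%N -> coprime a1 a2 ->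
  (a1 * i + a2 * j = a1 * g + a2 * d)%N -> (i <= g)%N ->
  g = (i + a2 * ((g - i) %/ a2))%N /\ j = (d + a1 * ((g - i) %/ a2))%N.
Proof.
move=> a2p cop E ig.
have le1 : (a1 * i <= a1 * g)%N by rewrite leq_mul2l ig orbT.
have h1 : (a1 * (g - i) + a2 * d = a2 * j)%N by rewrite mulnBr; lia.
have dv : (a2 %| a1 * (g - i))%N.
  have -> : (a1 * (g - i) = a2 * j - a2 * d)%N by lia.
  by rewrite -mulnBr dvdn_mulr.
have dv2 : (a2 %| g - i)%N by rewrite -(Gauss_dvdr _ (_ : coprime a2 a1)) // coprime_sym.
move: dv2 => /dvdnP [k hk].
rewrite hk mulnK //.
split; first by lia.
move: h1; rewrite hk => h1.
have : (a2 * (a1 * k + d) = a2 * j)%N by rewrite mulnDr; lia.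
move/eqP; rewrite eqn_pmul2l // => /eqP h2.
lia.
Qed.
Lemma key (phi : {poly {poly R}}) A B x y : (0 < A.2)%N -> coprime A.1 A.2 ->
  (forall i j, coef2 phi i j != 0 -> wdeg A (i,j) = B) -> x != 0 ->
  eval2 phi x y = x ^+ main_xexp phi * y ^+ main_yexp phi
                  * (charpoly phi A).[x ^- A.2 * y ^+ A.1].
Proof.
move=> A2p cop H xn.
have [->|phi0] := eqVneq phi 0.
  by rewrite /eval2 /charpoly size_poly0 big_ord0 !horner0 mulr0.
set g := main_xexp phi; set d := main_yexp phi.
have Hm : coef2 phi g d != 0.
  rewrite /coef2 /g /d /main_xexp /main_yexp -[phi`_ _]lead_coefE -lead_coefE.
  by rewrite !lead_coef_eq0.
rewrite eval2E charpolyE mulr_sumr; apply: eq_bigr => i _.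
rewrite mulr_sumr; apply: eq_bigr => j _.
have [c0|cn] := eqVneq (coef2 phi i j) 0; first by rewrite c0 !mul0r mulr0.
have Wi := H _ _ cn; have Wm := H _ _ Hm; rewrite /wdeg /= in Wi Wm.
have ig : (i <= g)%N by rewrite /g /main_xexp; have := ltn_ord i; lia.
have E : (A.1 * i + A.2 * j = A.1 * g + A.2 * d)%N by rewrite Wi Wm.
have [eg ej] := natkey _ _ _ _ _ _ A2p cop E ig.
rewrite -/g.
move: eg ej; set k := ((g - i) %/ A.2)%N => eg ej.
rewrite ej [in x ^+ g]eg.
rewrite !exprD exprMn exprVn -!exprM.
have hx : x ^+ (A.2 * k) != 0 by rewrite expf_neq0.
by field.
Qed.
Lemma phi_hom (p : {poly {poly R}}) A n : exists B,
  forall i j, coef2 (phi_ p A n) i j != 0 -> wdeg A (i,j) = B.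
Proof.
rewrite /phi_; case: ifP => _; last by exists 0%N => i j; rewrite /coef2 !coef0 eqxx.
exists (nth 0%N (levels p A) n) => i j.
rewrite /coef2 /qh_part coef_poly; case: ifP => _; last by rewrite coef0 eqxx.
rewrite coef_poly; case: ifP => _; last by rewrite eqxx.
by case: ifP => [/eqP //|]; rewrite eqxx.
Qed.
End K.

Theorem mainTheorem11 (R : realType) (p : {poly {poly R}}) (A : nat * nat) :
  eval2 p 0 0 = 0 ->
  eval2 (dx p) 0 0 = 0 -> eval2 (dy p) 0 0 = 0 ->
  conv_dim2 p ->
  (forall B : nat * nat, (0 < B.1)%N -> (0 < B.2)%N ->
     forall x y : R, 0 <= eval2 (main_form p B) x y) ->
  in_calA p A ->
  phi_ p A 2 != 0 ->
  tildeC2 p A ->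
  forall u0 : R, tildeU p A u0 ->
  ~ exists x y : R,
      [/\ x != 0, y != 0, x ^- A.2 * y ^+ A.1 = u0 &
          x ^+ main_xexp (phi_ p A 2) * y ^+ main_yexp (phi_ p A 2)
            * (g_ p A 2).[u0] < 0].
Proof.
move=> _ _ _ _ _ [[A1p A2p cop] _ _ _] _ [C1 _] u0 [U1 U2] [x [y [xn yn hu neg]]].
have [B0 H0] := @phi_hom R p A 0; have [B1 H1] := @phi_hom R p A 1.
have [B2 H2] := @phi_hom R p A 2.
have z0 : eval2 (phi_ p A 0) x y = 0.
  by rewrite (@key R _ A _ x y A2p cop H0 xn) hu; rewrite /g_ in U1; rewrite U1 mulr0.
have z1 : eval2 (phi_ p A 1) x y = 0.
  by rewrite (@key R _ A _ x y A2p cop H1 xn) hu; rewrite /g_ in U2; rewrite U2 mulr0.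
have := C1 x y z0 z1 xn yn.
rewrite (@key R _ A _ x y A2p cop H2 xn) hu.
by rewrite /g_ in neg; rewrite lt_gtF.
Qed.
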